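(* Under the setup below, fix $K=(k_1,\dots,k_r)$ and two distinct ordered tuples $L,L'$ of $r$ distinct target indices in $[d]$. Let $M_{L,L'}(y)$ be the $\binom{2r-1}{r}\times2$ matrix whose rows are indexed by all $\alpha\in\mathbb N^r$ with $|\alpha|=r$ and whose row $\alpha$ is $(D_{\alpha,L}(y),D_{\alpha,L'}(y))$. Then all $2\times2$ minors of $M_{L,L'}(y)$ are homogeneous polynomials of degree $2r$ vanishing on the attention variety.
   Context: Setup: $d'=1$, $t>1$, $Q,K\in\mathbb R^{a\times d}$, $V\in\mathbb R^{1\times d}$ with row $v$, $A=K^\top Q$, $\varphi_W(X)=VX(X^\top AX)$, $X=(x_{kn})\in\mathbb R^{d\times t}$; fix $j\in[t]$, $n\ne j$, and $2\le r\le\min(a,d)$; $k_1,\dots,k_r$ are distinct elements of $[d]$. $y_{n,j}(\mathcal A,b)$ denotes the coefficient of $(\prod_{u\in\mathcal A}x_{un})x_{bj}$ in $\varphi_W(X)[1,j]$ divided by the number of distinct orderings of the size-2 multiset $\mathcal A$; $\omega(u,w)=1$ if $u=w$, $2$ otherwise. For $\alpha\in\mathbb N^r$ with $|\alpha|=r$, choose $f:[r]\to[r]$ with $|f^{-1}(m)|=\alpha_m$ whose only directed cycles are fixed points, and for a tuple $L=(l_1,\dots,l_r)$ of distinct indices set $D_{\alpha,L}(y)=\det\big(\omega(k_{f(p)},k_p)\,y_{n,j}(\{k_{f(p)},k_p\},l_q)\big)_{p,q=1}^r$; on $\mu(W)$ this equals $(\prod_m v_{k_m}^{\alpha_m})\det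 A_{K,L}$. $\mu$ maps $W$ to all scaled coefficients; the attention variety is the Zariski closure of $\operatorname{im}\mu$. *)

(* Defs.v *)
From HB Require Import structures.
From mathcomp Require Import all_boot all_order all_algebra.
From mathcomp Require Import reals.
From mathcomp Require Import mpoly.

Set Implicit Arguments.
Unset Strict Implicit.
Unset Printing Implicit Defensive.

Import GRing.Theory.
Local Open Scope ring_scope.

Section Attention.
Variables (R : realType) (a d t : nat).

Definition NX := #|{: 'I_d * 'I_t}|.

Definition xidx (k : 'I_d) (n : 'I_t) : 'I_NX := enum_rank (k, n).

Definition Xmat : 'M[{mpoly R[NX]}]_(d, t) := \matrix_(k, n) 'X_(xidx k n).

Definition phiW (Q Kk : 'M[R]_(a, d)) (V : 'M[R]_(1, d)) : 'M[{mpoly R[NX]}]_(1, t) :=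
  let A := map_mx (@mpolyC NX R) (Kk^T *m Q) in
  map_mx (@mpolyC NX R) V *m Xmat *m (Xmat^T *m A *m Xmat).

(* number of distinct orderings of the size-2 multiset {k, u} *)
Definition norderings (k u : 'I_d) : nat := if k == u then 1%N else 2%N.

Definition ycoef (Q Kk : 'M[R]_(a, d)) (V : 'M[R]_(1, d))
    (n j : 'I_t) (k u b : 'I_d) : R :=
  (phiW Q Kk V ord0 j)@_(U_(xidx k n) + U_(xidx u n) + U_(xidx b j))%MM
    / (norderings k u)%:R.

(* Coordinates of the ambient space: y_{n,j}({k,u}, b) with n <> j; the
   multiset {k,u} is represented by the sorted pair (k <= u). *)
Definition ycoord := {c : 'I_t * 'I_t * 'I_d * 'I_d * 'I_d |
   (c.1.1.1.1 != c.1.1.1.2) && (c.1.1.2 <= c.1.2)%N}.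

Definition NY := #|{: ycoord}|.

Definition mu (Q Kk : 'M[R]_(a, d)) (V : 'M[R]_(1, d)) : 'I_NY -> R :=
  fun i => let c := val (enum_val i) in
           ycoef Q Kk V c.1.1.1.1 c.1.1.1.2 c.1.1.2 c.1.2 c.2.

(* The attention variety: Zariski closure of the image of mu. *)
Definition attention_variety (y : 'I_NY -> R) : Prop :=
  forall p : {mpoly R[NY]},
    (forall (Q Kk : 'M[R]_(a, d)) (V : 'M[R]_(1, d)), p.@[mu Q Kk V] = 0) ->
    p.@[y] = 0.

Definition yvar (n j : 'I_t) (k u b : 'I_d) : {mpoly R[NY]} :=
  match (insub (n, j, if (k <= u)%N then k else u,
                       if (k <= u)%N then u else k, b) : option ycoord) with
  | Some c => 'X_(enum_rank c)
  | None => 0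
  end.

Definition omega (u w : 'I_d) : nat := if u == w then 1%N else 2%N.

(* D_{alpha,L}(y) for the chosen f (alpha enters through f) *)
Definition Dpoly (n j : 'I_t) (r : nat) (kk L : r.-tuple 'I_d)
    (f : 'I_r -> 'I_r) : {mpoly R[NY]} :=
  \det (\matrix_(p < r, q < r)
          ((omega (tnth kk (f p)) (tnth kk p))%:R *
           yvar n j (tnth kk (f p)) (tnth kk p) (tnth L q))).

End Attention.

(* f : [r] -> [r] with |f^{-1}(m)| = alpha_m whose only directed cycles
   (in the functional graph p -> f p) are fixed points *)
Definition admissible_f (r : nat) (alpha : {ffun 'I_r -> nat}) (f : 'I_r -> 'I_r) : Prop :=
  (forall m : 'I_r, #|[pred p | f p == m]| = alpha m) /\
  (forall (p : 'I_r) (k : nat), (0 < k)%N -> iter k f p = p -> f p = p).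

(* Main.v *)
Require Import Defs.
From HB Require Import structures.
From mathcomp Require Import all_boot all_order all_algebra.
From mathcomp Require Import reals.
From mathcomp Require Import mpoly.
From mathcomp Require Import zify ring.
From mathcomp Require Import perm.

Set Implicit Arguments.
Unset Strict Implicit.
Unset Printing Implicit Defensive.
Import GRing.Theory Num.Theory.
Local Open Scope ring_scope.
Lemma yvar_homog (R : realType) d t (n j : 'I_t) (k u b : 'I_d) :
  yvar R n j k u b \is 1.-homog.
Proof.
rewrite /yvar; case: insub => [c|]; last exact: rpred0.
by rewrite dhomogX; apply/eqP; apply: mdeg1.
Qed.
Lemma prod_homog (R : realType) N (I : eqType) (s : seq I) (F : I -> {mpoly R[N]}) :
  (forall i, F i \is 1.-homog) -> \prod_(i <- s) F i \is (size s).-homog.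
Proof.
move=> H; elim: s => [|x s IH]; first by rewrite big_nil dhomog1.
by rewrite big_cons /=; rewrite -add1n; apply: dhomogM.
Qed.
Lemma Dpoly_homog (R : realType) d t (n j : 'I_t) r (kk L : r.-tuple 'I_d) f :
  Dpoly R n j kk L f \is r.-homog.
Proof.
rewrite /Dpoly /determinant; apply: rpred_sum => s _.
suff: (-1) ^+ odd_perm s * \prod_i (\matrix_(p, q) ((omega (tnth kk (f p)) (tnth kk p))%:R * yvar R n j (tnth kk (f p)) (tnth kk p) (tnth L q))) i (s i) \is (0 + r)%N.-homog by rewrite add0n.
apply: dhomogM.
  by case: (odd_perm s); rewrite ?expr1 ?expr0 ?rpredN dhomog1.
have := @prod_homog R _ _ (enum 'I_r) (fun i => (\matrix_(p, q) ((omega (tnth kk (f p)) (tnth kk p))%:R * yvar R n j (tnth kk (f p)) (tnth kk p) (tnth L q))) i (s i)).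
rewrite size_enum_ord big_enum; apply => i; rewrite mxE.
by rewrite mulr_natl; apply: rpredMn; apply: yvar_homog.
Qed.
Lemma xidx_eq d t (k k' : 'I_d) (m m' : 'I_t) :
  (xidx k m == xidx k' m') = (k == k') && (m == m').
Proof. by rewrite /xidx (inj_eq enum_rank_inj) xpair_eqE. Qed.

Lemma U2_eq N (x y z w : 'I_N) :
  (U_(x) + U_(y) = U_(z) + U_(w))%MM -> (x == z) && (y == w) || (x == w) && (y == z).
Proof.
move=> E.
have C i : ((x == i) + (y == i) = (z == i) + (w == i))%N.
  by have := congr1 (fun mm : 'X_{1..N} => mm i) E; rewrite /= !mnmDE !mnm1E.
case: (eqVneq x z) => [xz|xz].
  subst z => /=; have Cy := C y; rewrite eqxx eq_sym in Cy.
  by move: Cy; case: (x == y); case: (eqVneq w y) => //= _; lia.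
case: (eqVneq x w) => [xw|xw]; last first.
  by have := C x; rewrite eqxx ![_ == x]eq_sym (negbTE xz) (negbTE xw); case: (x == y).
subst w => /=; have Cy := C y; rewrite eqxx [x == y]eq_sym in Cy.
by move: Cy; case: (y == x); case: (eqVneq z y) => /= _; lia.
Qed.

Lemma mono_eq d t (n j m : 'I_t) (k' u' b' k u b : 'I_d) : n != j ->
  ((U_(xidx k' m) + U_(xidx u' m) + U_(xidx b' j))%MM ==
   (U_(xidx k n) + U_(xidx u n) + U_(xidx b j))%MM) =
  [&& m == n, b' == b & ((k' == k) && (u' == u)) || ((k' == u) && (u' == k))].
Proof.
move=> nj; apply/eqP/idP.
- move=> E.
  have C i : ((xidx k' m == i) + (xidx u' m == i) + (xidx b' j == i) =
              (xidx k n == i) + (xidx u n == i) + (xidx b j == i))%N.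
    by have := congr1 (fun mm : 'X_{1..NX d t} => mm i) E; rewrite /= !mnmDE !mnm1E.
  have Cb := C (xidx b' j); rewrite !xidx_eq !eqxx (negbTE nj) !andbF !andbT in Cb.
  have bb : b' == b by move: Cb; rewrite [b == _]eq_sym; case: (b' == b) => //=; lia.
  have Ck := C (xidx k n); rewrite !xidx_eq !eqxx (eq_sym j) (negbTE nj) !andbF !andbT in Ck.
  have mn : m == n by move: Ck; case: (m == n); rewrite ?andbF //=; lia.
  rewrite mn bb /=; move/eqP: bb E => ->; move/eqP: mn => -> /addIm /U2_eq.
  by rewrite !xidx_eq !eqxx !andbT.
- case/and3P => /eqP-> /eqP-> /orP [/andP[/eqP-> /eqP->]|/andP[/eqP-> /eqP->]] //.
  by congr (_ + _)%MM; rewrite addmC.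
Qed.
Lemma phiW_entry (R : realType) a d t (Q Kk : 'M[R]_(a, d)) (V : 'M[R]_(1, d)) (j : 'I_t) :
  phiW t Q Kk V ord0 j = \sum_(m < t) \sum_(k' < d) \sum_(u' < d) \sum_(b' < d)
    (V ord0 k' * (Kk^T *m Q) u' b')%:MP *
     'X_[U_(xidx k' m) + U_(xidx u' m) + U_(xidx b' j)].
Proof.
rewrite /phiW !mxE; apply: eq_bigr => m _; rewrite !mxE big_distrl /=.
apply: eq_bigr => k' _; rewrite big_distrr /=.
under eq_bigr => b' _ do rewrite !mxE big_distrl big_distrr /=.
rewrite exchange_big /=.
apply: eq_bigr => u' _; apply: eq_bigr => b' _.
rewrite /Xmat !mxE !mpolyXD rmorphM /=.
ring.
Qed.


Lemma sum_only (R : realType) (T : finType) (x : T) (F : T -> R) :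
  (forall i, i != x -> F i = 0) -> \sum_i F i = F x.
Proof. by move=> H; rewrite (bigD1 x) //= big1 ?addr0 // => i /H. Qed.

Lemma sum_two (R : realType) (T : finType) (x y : T) (F : T -> R) : x != y ->
  (forall i, i != x -> i != y -> F i = 0) -> \sum_i F i = F x + F y.
Proof.
move=> xy H; rewrite (bigD1 x) //= (bigD1 y) 1?eq_sym //= big1 ?addr0 //.
by move=> i /andP[ix iy]; apply: H.
Qed.

Lemma ycoef_val (R : realType) a d t (Q Kk : 'M[R]_(a, d)) (V : 'M[R]_(1, d))
  (n j : 'I_t) (k u b : 'I_d) : n != j ->
  ycoef Q Kk V n j k u b =
  (if k == u then V ord0 k * (Kk^T *m Q) k b
   else V ord0 k * (Kk^T *m Q) u b + V ord0 u * (Kk^T *m Q) k b)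
  / (norderings k u)%:R.
Proof.
move=> nj; rewrite /ycoef phiW_entry; congr (_ / _).
set c := fun k' u' b' => V ord0 k' * (Kk^T *m Q) u' b'.
transitivity (\sum_(m < t) \sum_(k' < d) \sum_(u' < d) \sum_(b' < d)
  c k' u' b' * ([&& m == n, b' == b & ((k' == k) && (u' == u)) || ((k' == u) && (u' == k))])%:R).
  rewrite raddf_sum; apply: eq_bigr => m _; rewrite raddf_sum; apply: eq_bigr => k' _.
  rewrite raddf_sum; apply: eq_bigr => u' _; rewrite raddf_sum; apply: eq_bigr => b' _.
  by apply: (etrans (mcoeffCM _ _ _)); rewrite mcoeffX mono_eq.
rewrite (sum_only (x:=n)) => [|m /negbTE mn]; last first.
  by rewrite big1 // => k' _; rewrite big1 // => u' _; rewrite big1 // => b' _; rewrite mn mulr0.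
have Hb k' u' : \sum_(b' < d) c k' u' b' *
    ([&& n == n, b' == b & ((k' == k) && (u' == u)) || ((k' == u) && (u' == k))])%:R
    = c k' u' b * (((k' == k) && (u' == u)) || ((k' == u) && (u' == k)))%:R.
  rewrite (sum_only (x:=b)) ?eqxx // => b' /negbTE bb.
  by rewrite bb andbF mulr0.
rewrite (eq_bigr _ (fun k' _ => eq_bigr _ (fun u' _ => Hb k' u'))).
case: (eqVneq k u) => [ku|ku].
  subst u; rewrite (sum_only (x:=k)) => [|k' /negbTE kk]; last first.
    by rewrite big1 // => u' _; rewrite kk /= mulr0.
  rewrite (sum_only (x:=k)) ?eqxx ?mulr1 // => u' /negbTE uk.
  by rewrite uk /= mulr0.
rewrite (sum_two ku) => [|k' /negbTE k1 /negbTE k2]; last first.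
  by rewrite big1 // => u' _; rewrite k1 k2 /= mulr0.
congr (_ + _).
  rewrite (sum_only (x:=u)) ?eqxx ?mulr1 // => u' /negbTE uu.
  by rewrite uu (negbTE ku) /= mulr0.
rewrite (sum_only (x:=k)) ?eqxx ?orbT ?mulr1 // => u' /negbTE uu.
by rewrite uu eq_sym (negbTE ku) /= mulr0.
Qed.

Definition Sval (R : realType) a d (Q Kk : 'M[R]_(a, d)) (V : 'M[R]_(1, d)) (k u b : 'I_d) : R :=
  if k == u then V ord0 k * (Kk^T *m Q) k b
  else V ord0 k * (Kk^T *m Q) u b + V ord0 u * (Kk^T *m Q) k b.

Lemma yvar_eval (R : realType) a d t (Q Kk : 'M[R]_(a, d)) (V : 'M[R]_(1, d))
  (n j : 'I_t) (k u b : 'I_d) : n != j ->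
  (yvar R n j k u b).@[mu Q Kk V] = Sval Q Kk V k u b / (norderings k u)%:R.
Proof.
move=> nj; rewrite /yvar; case: insubP => [c _ cE|]; last first.
  by rewrite /= nj /=; case: (leqP k u) => [kl|/ltnW kl]; rewrite kl.
rewrite (mevalXU (mu Q Kk V)) /mu enum_rankK cE /= ycoef_val // /Sval /norderings.
case: leqP => // _; rewrite [u == k]eq_sym; case: eqVneq => [->|] //.
by rewrite addrC.
Qed.

Definition Bmat (R : realType) d (V : 'M[R]_(1, d)) r (kk : r.-tuple 'I_d) (f : 'I_r -> 'I_r) : 'M[R]_r :=
  \matrix_(p, s) ((s == p)%:R * V ord0 (tnth kk (f p)) +
     (if tnth kk (f p) == tnth kk p then 0 else (s == f p)%:R * V ord0 (tnth kk p))).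

Definition Emat (R : realType) a d (Q Kk : 'M[R]_(a, d)) r (kk L : r.-tuple 'I_d) : 'M[R]_r :=
  \matrix_(s, q) (Kk^T *m Q) (tnth kk s) (tnth L q).

Lemma Dpoly_eval (R : realType) a d t (Q Kk : 'M[R]_(a, d)) (V : 'M[R]_(1, d))
  (n j : 'I_t) r (kk L : r.-tuple 'I_d) (f : 'I_r -> 'I_r) : n != j ->
  (Dpoly R n j kk L f).@[mu Q Kk V] = \det (Bmat V kk f) * \det (Emat Q Kk kk L).
Proof.
move=> nj; rewrite /Dpoly -(det_map_mx (meval (mu Q Kk V))) -det_mulmx.
congr (\det _); apply/matrixP => p q; rewrite !mxE.
rewrite rmorphM rmorph_nat /= yvar_eval // /omega -/(norderings _ _).
rewrite mulrC divfK; last by rewrite /norderings; case: (tnth kk (f p) == tnth kk p); rewrite pnatr_eq0.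
rewrite /Bmat /Emat /Sval; move: (Kk^T *m Q) => A.
under eq_bigr do rewrite !mxE mulrDl.
rewrite big_split /=.
rewrite (sum_only (x:=p)) ?eqxx ?mul1r; last by move=> s /negbTE ->; rewrite !mul0r.
case: eqP => [E|NE].
  rewrite big1 ?addr0 ?E // => s _; by rewrite mul0r.
rewrite (sum_only (x:=f p)) ?eqxx ?mul1r; last by move=> s /negbTE ->; rewrite !mul0r.
by rewrite mulrC.
Qed.

Theorem mainTheorem13 (R : realType) (a d t : nat) (j n : 'I_t) (r : nat)
    (kk L L' : r.-tuple 'I_d) :
  (1 < t)%N -> n != j -> (2 <= r)%N -> (r <= minn a d)%N ->
  uniq kk -> uniq L -> uniq L' -> L != L' ->
  forall (alpha beta : {ffun 'I_r -> nat}) (fa fb : 'I_r -> 'I_r),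
    (\sum_(i < r) alpha i)%N = r -> (\sum_(i < r) beta i)%N = r ->
    alpha != beta ->
    admissible_f alpha fa -> admissible_f beta fb ->
    let minor := Dpoly R n j kk L fa * Dpoly R n j kk L' fb
               - Dpoly R n j kk L fb * Dpoly R n j kk L' fa in
    minor \is (2 * r)%N.-homog /\
    (forall y : 'I_(NY d t) -> R, @attention_variety R a d t y -> minor.@[y] = 0).
Proof.
move=> _ nj _ _ _ _ _ _ alpha beta fa fb _ _ _ _ _ minor; split.
  suff: minor \is (r + r)%N.-homog by rewrite addnn mul2n.
  by rewrite /minor; apply: rpredB; apply: dhomogM; apply: Dpoly_homog.
move=> y Hy; apply: Hy => Q Kk V.
rewrite /minor mevalB !mevalM !Dpoly_eval //; ring.
Qed.
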